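(* Let $(\mathfrak n,I,g)$ be a $\mathfrak k$-nilpotent triple with $\mathfrak k$ abelian, and $\mathsf N$ the corresponding simply-connected Lie group (with $I$ and $g$ extended to left-invariant tensor fields). Then $(\mathsf N,g)$ admits a metric connection $\nabla$ with parallel torsion and parallel curvature, whose torsion $T$ is totally skew-symmetric, and which satisfies $\nabla I=0$. Moreover, every central left-invariant vector field $U\in\mathfrak z(\mathfrak n)$ is $\nabla$-parallel, and $$g(T(X,Y),Z)=-g([X,Y],Z)-g([Y,Z],X)-g([Z,X],Y)$$ for all left-invariant vector fields $X,Y,Z\in\mathfrak n$.
   Context: $\mathfrak k$-nilpotent triple: given a compact Lie algebra $\mathfrak k$ with bi-invariant scalar product $\langle\cdot,\cdot\rangle_{\mathfrak k}$ and a finite-dimensional unitary representation $\varphi:\mathfrak k\to\mathfrak u(V,I,\langle\cdot,\cdot\rangle_V)$ without trivial submodules, it is $(\mathfrak n,I,g)$ where $\mathfrak n=\mathfrak k+V$ with only non-zero brackets $[v_1,v_2]\in\mathfrak k$ given by $\langle[v_1,v_2],K\rangle_{\mathfrak k}=\langle\varphi(K)v_1,v_2\rangle_V$ ($v_i\in V$, $K\in\mathfrak k$), $I$ is the complex structure on $V$ (the transverse complex structure, regarded as an endomorphism of $\mathfrak n$ vanishing on $\mathfrak k$), and $g=\langle\cdot,\cdot\rangle_{\mathfrak k}\oplus\langle\cdot,\cdot\rangle_V$. The centre of $\mathfrak n$ is $\mathfrak z(\mathfrak n)=\mathfrak k$. *)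

(* Defs.v *)
From HB Require Import structures.
From mathcomp Require Import all_boot all_order all_algebra.
From mathcomp Require Import reals.
Set Implicit Arguments. Unset Strict Implicit. Unset Printing Implicit Defensive.
Import Order.TTheory GRing.Theory Num.Theory.
Local Open Scope ring_scope.

Section Triple.
Variables (R : realType) (m n : nat).

Definition ip (k : nat) (G : 'M[R]_k) (x y : 'rV[R]_k) : R := (x *m G *m y^T) 0 0.

Definition scalar_product (k : nat) (G : 'M[R]_k) : Prop :=
  G^T = G /\ forall x : 'rV[R]_k, x != 0 -> 0 < ip G x x.

(* The representation phi : k = R^m -> End(V), phi(K) = sum_i K_i A_i,
   acting on row vectors v |-> v *m phi(K). *)
Definition phiM (A : 'I_m -> 'M[R]_n) (K : 'rV[R]_m) : 'M[R]_n :=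
  \sum_(i < m) K 0 i *: A i.
Definition act (A : 'I_m -> 'M[R]_n) (K : 'rV[R]_m) (v : 'rV[R]_n) : 'rV[R]_n :=
  v *m phiM A K.

(* the Lie algebra n = k + V, as pairs *)
Definition nT := ('rV[R]_m * 'rV[R]_n)%type.

Definition nbr (br : 'rV[R]_n -> 'rV[R]_n -> 'rV[R]_m) (X Y : nT) : nT :=
  (br X.2 Y.2, 0).

Definition ng (Gk : 'M[R]_m) (Gv : 'M[R]_n) (X Y : nT) : R :=
  ip Gk X.1 Y.1 + ip Gv X.2 Y.2.

Definition nI (J : 'M[R]_n) (X : nT) : nT := (0, X.2 *m J).

Definition central (br : 'rV[R]_n -> 'rV[R]_n -> 'rV[R]_m) (U : nT) : Prop :=
  forall X : nT, nbr br U X = 0.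

(* A left-invariant connection on N is the same as a bilinear map
   nab : n x n -> n, (X,Y) |-> nab_X Y. *)
Definition bilinear_conn (nab : nT -> nT -> nT) : Prop :=
  (forall (a : R) (X Y Z : nT), nab (a *: X + Y) Z = a *: nab X Z + nab Y Z) /\
  (forall (a : R) (X Y Z : nT), nab X (a *: Y + Z) = a *: nab X Y + nab X Z).

Definition torsion br (nab : nT -> nT -> nT) (X Y : nT) : nT :=
  nab X Y - nab Y X - nbr br X Y.

Definition curvature br (nab : nT -> nT -> nT) (X Y Z : nT) : nT :=
  nab X (nab Y Z) - nab Y (nab X Z) - nab (nbr br X Y) Z.

Definition metric_conn Gk Gv (nab : nT -> nT -> nT) : Prop :=
  forall X Y Z : nT, ng Gk Gv (nab X Y) Z + ng Gk Gv Y (nab X Z) = 0.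

Definition parallel_torsion br (nab : nT -> nT -> nT) : Prop :=
  forall W X Y : nT,
    nab W (torsion br nab X Y) - torsion br nab (nab W X) Y
      - torsion br nab X (nab W Y) = 0.

Definition parallel_curvature br (nab : nT -> nT -> nT) : Prop :=
  forall W X Y Z : nT,
    nab W (curvature br nab X Y Z) - curvature br nab (nab W X) Y Z
      - curvature br nab X (nab W Y) Z - curvature br nab X Y (nab W Z) = 0.

(* g(T(X,Y),Z) is totally skew-symmetric (T is already skew in X,Y) *)
Definition skew_torsion Gk Gv br (nab : nT -> nT -> nT) : Prop :=
  forall X Y Z : nT,
    ng Gk Gv (torsion br nab X Y) Z = - ng Gk Gv (torsion br nab X Z) Y.

Definition parallel_I J (nab : nT -> nT -> nT) : Prop :=
  forall X Y : nT, nab X (nI J Y) = nI J (nab X Y).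

End Triple.

(* Main.v *)
Require Import Defs.
From mathcomp Require Import all_boot all_order all_algebra.
From mathcomp Require Import reals.
From mathcomp Require Import ring lra.
Import Order.TTheory GRing.Theory Num.Theory.
Local Open Scope ring_scope.

Section Helpers.
Variables (R : realType) (m n : nat).

Lemma p1B (x y : nT R m n) : (x - y).1 = x.1 - y.1. Proof. by []. Qed.
Lemma p2B (x y : nT R m n) : (x - y).2 = x.2 - y.2. Proof. by []. Qed.
Lemma p1D (x y : nT R m n) : (x + y).1 = x.1 + y.1. Proof. by []. Qed.
Lemma p2D (x y : nT R m n) : (x + y).2 = x.2 + y.2. Proof. by []. Qed.
Lemma p1Z a (x : nT R m n) : (a *: x).1 = a *: x.1. Proof. by []. Qed.
Lemma p2Z a (x : nT R m n) : (a *: x).2 = a *: x.2. Proof. by []. Qed.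
Lemma p10 : (0 : nT R m n).1 = 0. Proof. by []. Qed.
Lemma p20 : (0 : nT R m n).2 = 0. Proof. by []. Qed.
Lemma pairE (x y : nT R m n) : x.1 = y.1 -> x.2 = y.2 -> x = y.
Proof. by case: x; case: y => /= ? ? ? ? -> ->. Qed.

Lemma ipDl k (G : 'M[R]_k) x y z : ip G (x + y) z = ip G x z + ip G y z.
Proof. by rewrite /ip !mulmxDl mxE. Qed.
Lemma ipZl k (G : 'M[R]_k) a x z : ip G (a *: x) z = a * ip G x z.
Proof. by rewrite /ip -!scalemxAl mxE. Qed.
Lemma ipNl k (G : 'M[R]_k) x z : ip G (- x) z = - ip G x z.
Proof. by rewrite -scaleN1r ipZl mulN1r. Qed.
Lemma ipBl k (G : 'M[R]_k) x y z : ip G (x - y) z = ip G x z - ip G y z.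
Proof. by rewrite ipDl ipNl. Qed.
Lemma ip0l k (G : 'M[R]_k) z : ip G 0 z = 0.
Proof. by rewrite /ip !mul0mx mxE. Qed.
Lemma ipsum k (G : 'M[R]_k) (F : 'I_m -> 'rV[R]_k) z :
  ip G (\sum_i F i) z = \sum_i ip G (F i) z.
Proof. by rewrite /ip !mulmx_suml summxE. Qed.
Lemma ipC k (G : 'M[R]_k) x y : G^T = G -> ip G x y = ip G y x.
Proof.
move=> sG; rewrite /ip.
rewrite -[in LHS](trmxK (x *m G *m y^T)) [in LHS]mxE.
by rewrite !trmx_mul trmxK sG mulmxA.
Qed.
Lemma ipDr k (G : 'M[R]_k) x y z : G^T = G -> ip G z (x + y) = ip G z x + ip G z y.
Proof. by move=> sG; rewrite !(@ipC _ _ z) // ipDl. Qed.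
Lemma ipNr k (G : 'M[R]_k) x z : G^T = G -> ip G z (- x) = - ip G z x.
Proof. by move=> sG; rewrite !(@ipC _ _ z) // ipNl. Qed.
Lemma ipBr k (G : 'M[R]_k) x y z : G^T = G -> ip G z (x - y) = ip G z x - ip G z y.
Proof. by move=> sG; rewrite ipDr // ipNr. Qed.
Lemma ip0r k (G : 'M[R]_k) z : G^T = G -> ip G z 0 = 0.
Proof. by move=> sG; rewrite ipC // ip0l. Qed.

Lemma phiM_lin (A : 'I_m -> 'M[R]_n) a K L :
  phiM A (a *: K + L) = a *: phiM A K + phiM A L.
Proof.
rewrite /phiM scaler_sumr -big_split; apply: eq_bigr => i _.
by rewrite !mxE scalerDl scalerA.
Qed.
Lemma phiM0 (A : 'I_m -> 'M[R]_n) : phiM A 0 = 0.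
Proof. by rewrite /phiM; apply: big1 => i _; rewrite mxE scale0r. Qed.
Lemma phiMD (A : 'I_m -> 'M[R]_n) K L : phiM A (K + L) = phiM A K + phiM A L.
Proof. by have := phiM_lin A 1 K L; rewrite !scale1r. Qed.
Lemma phiMN (A : 'I_m -> 'M[R]_n) K : phiM A (- K) = - phiM A K.
Proof. by have := phiM_lin A (-1) K 0; rewrite phiM0 !addr0 !scaleN1r. Qed.

Lemma phiM_commM (A : 'I_m -> 'M[R]_n) (M : 'M[R]_n) K :
  (forall i, A i *m M = M *m A i) -> phiM A K *m M = M *m phiM A K.
Proof.
move=> h; rewrite /phiM mulmx_suml mulmx_sumr; apply: eq_bigr => i _.
by rewrite -scalemxAl -scalemxAr h.
Qed.
Lemma phiM_comm (A : 'I_m -> 'M[R]_n) K L :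
  (forall i j, A i *m A j = A j *m A i) ->
  phiM A K *m phiM A L = phiM A L *m phiM A K.
Proof.
move=> h; apply: phiM_commM => i.
by rewrite (phiM_commM A (A i) L (fun j => h j i)).
Qed.

Lemma phiM_skew (A : 'I_m -> 'M[R]_n) (Gv : 'M[R]_n) K v w :
  Gv^T = Gv ->
  (forall i (v w : 'rV[R]_n), ip Gv (v *m A i) w = - ip Gv v (w *m A i)) ->
  ip Gv (v *m phiM A K) w = - ip Gv v (w *m phiM A K).
Proof.
move=> sG h; rewrite /phiM !mulmx_sumr ipsum (@ipC _ _ v) // ipsum -sumrN.
apply: eq_bigr => i _; rewrite -!scalemxAr ipZl ipZl h -(@ipC _ _ v) //.
by rewrite mulrN.
Qed.

End Helpers.

Definition nab0 (R : realType) (m n : nat) (A : 'I_m -> 'M[R]_n)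
  (X Y : nT R m n) : nT R m n := (0, - (Y.2 *m phiM A X.1)).

Theorem proposition8p4 (R : realType) (m n : nat)
    (Gk : 'M[R]_m) (Gv : 'M[R]_n) (J : 'M[R]_n) (A : 'I_m -> 'M[R]_n)
    (br : 'rV[R]_n -> 'rV[R]_n -> 'rV[R]_m) :
  (* scalar products on k (bi-invariant: automatic, k abelian) and on V *)
  scalar_product Gk -> scalar_product Gv ->
  (* (V, I, <,>_V) Hermitian: I complex structure, orthogonal *)
  J *m J = - 1%:M ->
  (forall v w : 'rV[R]_n, ip Gv (v *m J) (w *m J) = ip Gv v w) ->
  (* phi : k -> u(V,I,<,>_V) is a Lie algebra representation of abelian k *)
  (forall i j, A i *m A j = A j *m A i) ->
  (forall i, A i *m J = J *m A i) ->
  (forall i (v w : 'rV[R]_n), ip Gv (v *m A i) w = - ip Gv v (w *m A i)) ->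
  (* no trivial submodules *)
  (forall v : 'rV[R]_n, (forall K : 'rV[R]_m, act A K v = 0) -> v = 0) ->
  (* the bracket V x V -> k of the triple *)
  (forall (v1 v2 : 'rV[R]_n) (K : 'rV[R]_m), ip Gk (br v1 v2) K = ip Gv (act A K v1) v2) ->
  exists nab : nT R m n -> nT R m n -> nT R m n,
    bilinear_conn nab /\
        metric_conn Gk Gv nab /\
        parallel_torsion br nab /\
        parallel_curvature br nab /\
        skew_torsion Gk Gv br nab /\
        parallel_I J nab /\
        (forall U X : nT R m n, central br U -> nab X U = 0) /\
        (forall X Y Z : nT R m n,
           ng Gk Gv (torsion br nab X Y) Z =
             - ng Gk Gv (nbr br X Y) Z - ng Gk Gv (nbr br Y Z) X
             - ng Gk Gv (nbr br Z X) Y).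
Proof.
move=> [sGk pGk] [sGv pGv] JJ Jorth Acomm AJ Askew notriv hbr.
have sk K v w := @phiM_skew R m n A Gv K v w sGv Askew.
have brE v1 v2 K : ip Gk (br v1 v2) K = ip Gv (v1 *m phiM A K) v2 by rewrite hbr.
have brW v w W : br (v *m phiM A W) w + br v (w *m phiM A W) = 0.
  set d := _ + _; apply/eqP; apply/negPn/negP => /pGk.
  rewrite {1}/d ipDl !brE (sk d (v *m phiM A W)) (sk W v) (sk d v) opprK.
  by rewrite -!mulmxA (@phiM_comm _ _ _ A d W Acomm) subrr ltxx.
have uniqk d : (forall K, ip Gk d K = 0) -> d = 0.
  move=> h; apply/eqP; apply/negPn/negP => /pGk; by rewrite h ltxx.
have brN1 v w : br (- v) w = - br v w.
  apply/eqP; rewrite -subr_eq0 opprK; apply/eqP/uniqk => K.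
  by rewrite ipDl !brE mulNmx ipNl addNr.
have brN2 v w : br v (- w) = - br v w.
  apply/eqP; rewrite -subr_eq0 opprK; apply/eqP/uniqk => K.
  by rewrite ipDl !brE ipNr // addNr.
have brA v w : br v w = - br w v.
  apply/eqP; rewrite -subr_eq0 opprK; apply/eqP/uniqk => K.
  by rewrite ipDl !brE sk (@ipC R _ _ v) // addNr.
have phC K L : phiM A K *m phiM A L = phiM A L *m phiM A K.
  exact: (@phiM_comm _ _ _ A K L Acomm).
set nab := nab0 R m n A.
have tE X Y : torsion br nab X Y = (- br X.2 Y.2, X.2 *m phiM A Y.1 - Y.2 *m phiM A X.1).
  apply: pairE; rewrite /torsion /nab /nab0 /=.
    by rewrite subrr sub0r.
  by rewrite subr0 opprK addrC.
have nE X Y : nab X Y = (0, - (Y.2 *m phiM A X.1)) by [].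
exists nab.
split.
  split=> a X Y Z; apply: pairE; rewrite /nab0 /= ?(addr0, scaler0) //.
  - by rewrite phiM_lin mulmxDr -scalemxAr opprD scalerN.
  - by rewrite mulmxDl -scalemxAl opprD scalerN.
split.
  move=> X Y Z; rewrite /ng /nab0 /= ip0l ip0r // add0r addrC ipNl ipNr //.
  by rewrite sk sub0r opprK addNr.
have cE X Y Z : curvature br nab X Y Z = (0, Z.2 *m phiM A (br X.2 Y.2)).
  apply: pairE; rewrite /curvature /nab /nab0 /=; first by rewrite !subrr.
  rewrite !mulNmx !opprK -!mulmxA (phC Y.1 X.1) subrr.
  by rewrite add0r.
split.
  move=> W X Y; rewrite !tE; apply: pairE; rewrite /= ?phiM0 ?mulmx0.
    by rewrite brN1 brN2 !opprK sub0r -opprD brW oppr0.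
  rewrite mulmxBl !mulNmx subr0 sub0r opprK -!mulmxA (phC Y.1 W.1) (phC X.1 W.1).
  by rewrite opprB opprK subrK subrr.
split.
  move=> W X Y Z; rewrite !cE; apply: pairE; rewrite /=; first by rewrite !subrr.
  rewrite brN1 brN2 !phiMN !mulmxN !mulNmx !opprK -!mulmxA (phC (br X.2 Y.2) W.1).
  by rewrite -[X in X + _ = 0]addrA -mulmxDr -phiMD brW phiM0 mulmx0 addr0 addNr.
split.
  move=> X Y Z; rewrite /ng !tE /= !ipNl !ipBl !brE (sk X.1 Y.2) (@ipC R _ Gv Y.2) //.
  lra.
split.
  move=> X Y; apply: pairE => //=.
  by rewrite !mulNmx -!mulmxA (@phiM_commM R m n A J X.1 AJ).
split.
  move=> U X hU; apply: pairE => //=.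
  suff -> : U.2 = 0 by rewrite mul0mx oppr0.
  apply: notriv => K; rewrite /act.
  have h w : br U.2 w = 0 by have := congr1 fst (hU (0, w)).
  apply/eqP; apply/negPn/negP => /pGv.
  by rewrite -brE h ip0l ltxx.
move=> X Y Z; rewrite /ng !tE /nbr /= !ip0l !addr0 !ipNl !ipBl !brE.
rewrite (sk X.1 Y.2) (@ipC R _ Gv Y.2) // (sk Y.1 X.2) (@ipC R _ Gv X.2) //.
lra.
Qed.
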